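(* (a) There exists a tree-shift of finite type $X=\mathsf{X}_{\mathcal{F}}$, with $\mathcal{F}$ a finite set of patterns, which is strongly irreducible but not uniformly block gluing. (b) There exists a tree-shift which is uniformly block gluing but not strongly irreducible.
   Context: $\Sigma=\{0,1\}$. $\Sigma^*$ is the set of finite words, with $\epsilon$ the empty word. $|x|$ is the length of $x$, $\Sigma^k$ is the set of words of length $k$, and $\Sigma_n=\bigcup_{0\le k\le n}\Sigma^k$. A tree is $t:\Sigma^*\to\mathcal{A}$ with $\mathcal{A}$ finite, and we write $t_x=t(x)$. A pattern $u$ is a map on a finite prefix-closed support $S(u)$. A tree-shift is $\mathsf{X}_{\mathcal{F}}$, the set of trees in which no pattern of $\mathcal{F}$ occurs at any node. A pattern is accepted by $X$ if it occurs in some $t\in X$. $B_n(X)=\{t|_{\Sigma_{n-1}}:t\in X\}$. For $w\in\Sigma^*$, $t|_{wS(v)}=v$ means $t_{wy}=v_y$ for all $y\in S(v)$. A leaf of $u$ is $w\in S(u)$ with $w0,w1\notin S(u)$. A complete prefix code (CPC) is a finite set $P\subseteq\Sigma^*\setminus\{\epsilon\}$ such that no word of $P$ is a prefix of another, and every $x$ with $|x|\ge\max_{y\in P}|y|$ has a prefix in $P$. Patterns $u,v$ are connected through $P$ if there is $t\in X$ with $t|_{S(u)}=u$ and $t|_{wxS(v)}=v$ for every leaf $w$ of $u$ and every $x\in P$. $X$ is: - block gluing if there is a CPC $P$ such that for every $n\ge1$ any $u,v\in B_n(X)$ are connected through $P$; - uniformly block gluing if this holds with $P=\Sigma^k$ for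 some $k\ge1$; - strongly irreducible if there is a CPC $P$ through which any two patterns accepted by $X$ are connected; - uniformly strongly irreducible if this holds with $P=\Sigma^k$ for some $k\ge1$. *)

(* Defs.v *)
From mathcomp Require Import all_boot.
Set Implicit Arguments. Unset Strict Implicit. Unset Printing Implicit Defensive.

(* Words over Sigma = {0,1}: seq bool (false = 0, true = 1); epsilon = [::].
   The word w0 is rcons w false, w1 is rcons w true, concatenation is ++. *)
Definition word := seq bool.

Definition tree (A : Type) := word -> A.

(* A pattern: a finite support S(u) (listed) and its labelling;
   values outside the support are irrelevant. *)
Record pattern (A : Type) := Pattern { supp : seq word; pval : word -> A }.

Definition is_pattern (A : Type) (u : pattern A) : Prop :=
  forall x y : word, (x ++ y) \in supp u -> x \in supp u.

Definition occurs_at (A : Type) (t : tree A) (u : pattern A) (w : word) : Prop :=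
  forall y, y \in supp u -> t (w ++ y) = pval u y.

Definition XF (A : Type) (F : pattern A -> Prop) : tree A -> Prop :=
  fun t => forall u, F u -> forall w, ~ occurs_at t u w.

Definition accepted (A : Type) (X : tree A -> Prop) (u : pattern A) : Prop :=
  is_pattern u /\ exists t, X t /\ occurs_at t u [::].

Definition B_n (A : Type) (X : tree A -> Prop) (n : nat) (u : pattern A) : Prop :=
  (forall x : word, (x \in supp u) = (size x <= n.-1)) /\
  exists t, X t /\ occurs_at t u [::].

Definition leaf (A : Type) (u : pattern A) (w : word) : Prop :=
  w \in supp u /\ rcons w false \notin supp u /\ rcons w true \notin supp u.

Definition CPC (P : seq word) : Prop :=
  (forall x, x \in P -> x != [::]) /\
  (forall x y, x \in P -> y \in P -> prefix x y -> x = y) /\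
  (forall x : word, \max_(y <- P) size y <= size x -> exists2 y, y \in P & prefix y x).

Definition connected (A : Type) (X : tree A -> Prop) (P : word -> Prop)
  (u v : pattern A) : Prop :=
  exists t, X t /\ occurs_at t u [::] /\
    forall w x, leaf u w -> P x -> occurs_at t v (w ++ x).

Definition block_gluing (A : Type) (X : tree A -> Prop) : Prop :=
  exists P : seq word, CPC P /\
    forall n, 1 <= n -> forall u v, B_n X n u -> B_n X n v ->
      connected X (fun x => x \in P) u v.

Definition uniformly_block_gluing (A : Type) (X : tree A -> Prop) : Prop :=
  exists k, 1 <= k /\
    forall n, 1 <= n -> forall u v, B_n X n u -> B_n X n v ->
      connected X (fun x : word => size x == k) u v.

Definition strongly_irreducible (A : Type) (X : tree A -> Prop) : Prop :=
  exists P : seq word, CPC P /\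
    forall u v, accepted X u -> accepted X v -> connected X (fun x => x \in P) u v.

Definition uniformly_strongly_irreducible (A : Type) (X : tree A -> Prop) : Prop :=
  exists k, 1 <= k /\
    forall u v, accepted X u -> accepted X v ->
      connected X (fun x : word => size x == k) u v.

(* Main.v *)
Require Import Defs.
From mathcomp Require Import all_boot zify.
From Stdlib Require Lists.List.
Definition prefs (w : word) : seq word := [seq take i w | i <- iota 0 (size w).+1].
Set Implicit Arguments. Unset Strict Implicit. Unset Printing Implicit Defensive.
Lemma prefs_closed w (x y : word) : (x ++ y) \in prefs w -> x \in prefs w.
Proof.
case/mapP=> i _ e.
have H := size_take_min i w; rewrite -e size_cat in H.
set sx := size x in H *. set sy := size y in H.
have hs : sx <= i by move: H; rewrite minnE; lia.
have hs2 : sx <= size w by move: H; rewrite minnE; lia.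
have -> : x = take sx w.
  by rewrite -(take_takel _ hs) -e take_size_cat.
apply/mapP; exists sx => //; rewrite mem_iota /=; lia.
Qed.

Lemma prefs_self w : w \in prefs w.
Proof. apply/mapP; exists (size w); last by rewrite take_size. by rewrite mem_iota; lia. Qed.

Lemma closed_cat (s1 s2 : seq word) :
  (forall x y, (x ++ y) \in s1 -> x \in s1) ->
  (forall x y, (x ++ y) \in s2 -> x \in s2) ->
  forall x y, (x ++ y) \in s1 ++ s2 -> x \in s1 ++ s2.
Proof.
move=> h1 h2 x y; rewrite !mem_cat => /orP [/h1 -> //|/h2 ->]; by rewrite orbT.
Qed.

Definition pat (c : bool) : pattern bool :=
  Pattern (prefs [::false] ++ prefs [::true]) (fun _ => c).
Lemma pat_is c : is_pattern (pat c).
Proof. exact: closed_cat (@prefs_closed _) (@prefs_closed _). Qed.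
Definition Fa : seq (pattern bool) := [:: pat true; pat false].
Definition Xa := XF (fun u => List.In u Fa).

Lemma occ_pat (t : tree bool) c w : t w = c -> t (rcons w false) = c -> t (rcons w true) = c ->
  occurs_at t (pat c) w.
Proof.
move=> h h0 h1 y; rewrite /= !inE.
case: y => [|b [|b' r]] /=.
- by rewrite cats0.
- by case: b; rewrite cats1.
- move=> H; exfalso; move: H; case: b; done.
Qed.

Lemma pat_in c : List.In (pat c) Fa.
Proof. by case: c; [left|right; left]. Qed.

Lemma Xa_rule t w c : Xa t -> t (rcons w false) = c -> t (rcons w true) = c -> t w = ~~ c.
Proof.
rewrite /Xa /XF => X h0 h1; case E: (t w); case: c h0 h1 => h0 h1 //; exfalso.
- exact: (X _ (pat_in true) w (@occ_pat t true w E h0 h1)).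
- exact: (X _ (pat_in false) w (@occ_pat t false w E h0 h1)).
Qed.

Lemma Xa_ok (t : tree bool) : (forall w, ~ (t w = t (rcons w false) /\ t w = t (rcons w true))) -> Xa t.
Proof.
move=> h u hu w o'; apply: (h w).
have [c ?] : exists c, u = pat c by case: hu => [<-|[<-|[]]]; eexists.
subst u.
have e0 := o' [::] isT; have e1 := o' [::false] isT; have e2 := o' [::true] isT.
move: e0 e1 e2; rewrite cats0 !cats1 /= => -> -> ->; by [].
Qed.

Inductive st := SA of word | SM | SC of word.
Definition leafb (u : pattern bool) (w : word) : bool :=
  [&& w \in supp u, rcons w false \notin supp u & rcons w true \notin supp u].
Definition stepf (u : pattern bool) (s : st) (b : bool) : st :=
  match s with
  | SA z => if leafb u z then (if b then SC [::] else SM) else SA (rcons z b)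
  | SM => SC [::]
  | SC r => SC (rcons r b)
  end.
Definition valf (t0 t1 : tree bool) (s : st) : bool :=
  match s with SA z => t0 z | SM => ~~ t1 [::] | SC r => t1 r end.
Definition glue (u : pattern bool) (t0 t1 : tree bool) : tree bool :=
  fun y => valf t0 t1 (foldl (stepf u) (SA [::]) y).

Lemma st_A u y z : foldl (stepf u) (SA [::]) y = SA z -> z = y.
Proof.
elim/last_ind: y z => [|y b IH] z /=; first by case.
rewrite foldl_rcons; case E: (foldl (stepf u) (SA [::]) y) => [z'||r] //=.
case: ifP => _; first by case: b.
by case=> <-; rewrite (IH _ E).
Qed.

Lemma st_supp u y : is_pattern u -> y \in supp u -> foldl (stepf u) (SA [::]) y = SA y.
Proof.
move=> hp; elim/last_ind: y => [|y b IH] //= hy.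
have hy' : y \in supp u by apply: (hp y [::b]); rewrite cats1.
rewrite foldl_rcons IH //= /leafb hy' /=.
by case: b hy => ->; rewrite ?andbF.
Qed.

Lemma st_C u r y : foldl (stepf u) (SC r) y = SC (r ++ y).
Proof.
elim/last_ind: y => [|y b IH]; first by rewrite cats0.
by rewrite foldl_rcons IH /= rcons_cat.
Qed.

Lemma Xa_no t w : Xa t -> ~ (t w = t (rcons w false) /\ t w = t (rcons w true)).
Proof.
move=> X [h0 h1]; have := @Xa_rule t w _ X (esym h0) (esym h1).
by case: (t w).
Qed.

Lemma glue_X u t0 t1 : Xa t0 -> Xa t1 -> Xa (glue u t0 t1).
Proof.
move=> X0 X1; apply: Xa_ok => w; rewrite /glue !foldl_rcons.
case E: (foldl (stepf u) (SA [::]) w) => [z||r] /=.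
- have ? := st_A E; subst z.
  case: ifP => _ /=; last exact: Xa_no.
  by move=> [-> ]; case: (t1 [::]).
- by move=> [e _]; move: e; case: (t1 [::]).
- exact: Xa_no.
Qed.

Definition Pa : seq word := [:: [::false;false]; [::false;true]; [::true]].

Lemma CPC_Pa : CPC Pa.
Proof.
split; [|split].
- by move=> x; rewrite !inE => /or3P [] /eqP ->.
- by move=> x y; rewrite !inE => /or3P [] /eqP -> /or3P [] /eqP ->.
- move=> x; rewrite !big_cons big_nil /=.
  case: x => [|[] [|[] r]] //= _.
  all: first [by exists [::true] | by exists [::false;true]; rewrite /= ?prefix0s | by exists [::false;false]; rewrite /= ?prefix0s].
Qed.

Lemma SI_a : strongly_irreducible Xa.
Proof.
exists Pa; split; first exact: CPC_Pa.
move=> u v [hu [t0 [X0 o0]]] [hv [t1 [X1 o1]]].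
exists (glue u t0 t1); split; first exact: glue_X.
split.
- move=> y hy; rewrite /glue st_supp //=; exact: o0.
- move=> w x [h1 [h2 h3]] hx y hy.
  have hl : leafb u w by rewrite /leafb h1 h2 h3.
  rewrite /glue -catA foldl_cat st_supp //.
  move: hx; rewrite !inE => /or3P [] /eqP -> /=; rewrite hl /= st_C /=; exact: o1.
Qed.

Definition u0 : pattern bool := Pattern (prefs [::false] ++ prefs [::true]) (fun y => last true y).

Lemma nUBG_a : ~ uniformly_block_gluing Xa.
Proof.
move=> [k [hk H]].
have Xl : Xa (fun y : word => last true y).
  by apply: Xa_ok => w; rewrite !last_rcons => -[-> ].
have B : B_n Xa 2 u0.
  split; last by exists (fun y : word => last true y); split.
  by case=> [|b [|b' r]] //=; case: b; rewrite //= ?andbF.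
have [t [Xt [o ov]]] := H 2 isT u0 u0 B B.
have Q : forall j, j <= k -> exists c, forall z : word, size z = k - j ->
    t (false :: z) = c /\ t (true :: z) = c.
  elim=> [|j IH] hj.
  - exists true => z hz; rewrite subn0 in hz.
    have lf : leaf u0 [::false] by [].
    have lt : leaf u0 [::true] by [].
    have := ov _ z lf (introT eqP hz) [::] isT.
    have := ov _ z lt (introT eqP hz) [::] isT.
    by rewrite /= !cats0 => -> ->.
  - have [c hc] := IH (ltnW hj).
    exists (~~ c) => z hz.
    have hz0 : size (rcons z false) = k - j by rewrite size_rcons hz; lia.
    have hz1 : size (rcons z true) = k - j by rewrite size_rcons hz; lia.
    have [a0 b0] := hc _ hz0; have [a1 b1] := hc _ hz1.
    split; exact: (Xa_rule Xt).
have [c hc] := Q k (leqnn k).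
have [e1 e2] := hc [::] (esym (subnn k)).
have := o [::false] isT; have := o [::true] isT; rewrite /= e1 e2 => ->; done.
Qed.

Definition Fb (u : pattern bool) : Prop :=
  is_pattern u /\ exists x y, x \in supp u /\ y \in supp u /\ size x = size y /\ pval u x != pval u y.
Definition Xb := XF Fb.

Lemma lc_X (t : tree bool) : (forall x y : word, size x = size y -> t x = t y) -> Xb t.
Proof.
move=> h u [_ [x [y [hx [hy [hs hne]]]]]] w o.
move: hne; rewrite -(o x hx) -(o y hy) (h (w ++ x) (w ++ y)) ?eqxx //.
by rewrite !size_cat hs.
Qed.

Lemma X_pat (t : tree bool) (u : pattern bool) : Xb t -> is_pattern u -> occurs_at t u [::] ->
  forall x y, x \in supp u -> y \in supp u -> size x = size y -> pval u x = pval u y.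
Proof.
move=> X hp o x y hx hy hs; apply/eqP; apply/negPn/negP => hne.
apply: (X u _ [::] o); split=> //; exists x, y; repeat split => //.
Qed.

Lemma UBG_b : uniformly_block_gluing Xb.
Proof.
exists 1; split=> // n hn u v [hu [tu [Xu ou]]] [hv [tv [Xv ov]]].
have pu : is_pattern u by move=> x y; rewrite !hu size_cat; lia.
have pv : is_pattern v by move=> x y; rewrite !hv size_cat; lia.
pose t : tree bool := fun z => if size z < n then pval u (nseq (size z) false)
                               else pval v (nseq (size z - n) false).
exists t; split; first by apply: lc_X => x y hs; rewrite /t hs.
split.
- move=> y hy; rewrite /t.
  have hy' := hy; rewrite hu in hy'.
  have -> : size y < n by move: hy'; set sy := size y; move: hn; clear; lia.
  apply: (X_pat Xu pu ou) => //; first by rewrite hu size_nseq.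
  by rewrite size_nseq.
- move=> w x [hw [hw0 _]] /eqP hx y hy; rewrite /t.
  move: hw hw0; rewrite !hu size_rcons => hw hw0.
  have hy' := hy; rewrite hv in hy'.
  rewrite !size_cat hx.
  have -> : (size w + 1 + size y < n) = false by apply/negbTE; lia.
  have -> : size w + 1 + size y - n = size y by lia.
  apply: (X_pat Xv pv ov) => //; first by rewrite hv size_nseq.
  by rewrite size_nseq.
Qed.

Definition ub : pattern bool :=
  Pattern (prefs [::false;false] ++ prefs [::false;true] ++ prefs [::true]) (fun _ => false).
Definition vb : pattern bool :=
  Pattern (prefs [::false] ++ prefs [::true]) (fun y => y != [::]).

Lemma nSI_b : ~ strongly_irreducible Xb.
Proof.
move=> [P [[Pne [Ppf Pc]] H]].
have accu : accepted Xb ub.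
  split; first exact: closed_cat (@prefs_closed _) (closed_cat (@prefs_closed _) (@prefs_closed _)).
  exists (fun _ => false); split => //; exact: lc_X.
have accv : accepted Xb vb.
  split; first exact: closed_cat (@prefs_closed _) (@prefs_closed _).
  exists (fun y : word => y != [::]); split => //.
  by apply: lc_X => x y hs; rewrite -!size_eq0 hs.
have hm : \max_(y <- P) size y <= size (nseq (\max_(y <- P) size y) false) by rewrite size_nseq.
have [x xP _] := Pc _ hm.
have [t [Xt [ou ov]]] := H ub vb accu accv.
have h1 := ov [::true] x (ltac:(by [])) xP [::false] isT.
have h2 := ov [::false;false] x (ltac:(by [])) xP [::] isT.
rewrite /= cats0 in h1 h2.
pose a : word := true :: (x ++ [::false]).
pose b : word := [:: false, false & x].
have := @X_pat t (Pattern (prefs a ++ prefs b) t) Xt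
  (closed_cat (@prefs_closed _) (@prefs_closed _)) (fun _ _ => erefl) a b.
rewrite !mem_cat !prefs_self orbT /= => /(_ isT isT).
rewrite size_cat addn1 => /(_ erefl).
by rewrite h1 h2.
Qed.

Theorem proposition3p8 :
  (exists (A : finType) (F : seq (pattern A)),
      (forall u, Stdlib.Lists.List.In u F -> is_pattern u) /\
      strongly_irreducible (XF (fun u => Stdlib.Lists.List.In u F)) /\
      ~ uniformly_block_gluing (XF (fun u => Stdlib.Lists.List.In u F))) /\
  (exists (A : finType) (F : pattern A -> Prop),
      (forall u, F u -> is_pattern u) /\
      uniformly_block_gluing (XF F) /\
      ~ strongly_irreducible (XF F)).
Proof.
split.
- exists bool, Fa; split; [|split; [exact: SI_a|exact: nUBG_a]].
  by move=> u [<-|[<-|[]]]; apply: pat_is.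
- exists bool, Fb; split; [by move=> u []|split; [exact: UBG_b|exact: nSI_b]].
Qed.
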